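(* Let $\mu>0$, $c>0$, $m>0$, $\tilde\delta\in(0,1/2)$, $C\ge0$, $g\ge0$, and real numbers $F_k\ge F^\star\ge0$, with $\frac{g^2}{4c^2}+\frac{4\tilde\delta\mu F_k}{3m}>0$. Define $\lambda>0$ by $$2\lambda=\max\Big(\sqrt{\frac{4Cg^3}{\frac{1}{4c^2}g^2+\frac{4\tilde\delta\mu F_k}{3m}}}-\mu,\ \mu\Big),$$ and set $r=\frac{g}{2\lambda+\mu}$ and $\tilde\epsilon=\tilde\delta\frac{\mu}{2\lambda+\mu}$. Then $$4Cr^3-\frac{\lambda}{c^2}r^2\le\frac{2\lambda}{2\lambda+\mu}\cdot\frac{4\tilde\epsilon}{m}(F_k-F^\star)+4\tilde\epsilon\Big(1+\frac1m\Big)F^\star.$$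
   Context: In the paper's application, $g=\|\nabla F(x_k)\|_2$, $F_k=F(x_k)$, $F^\star=\min F$, $C$ bounds the cubic Taylor remainder, and $\lambda=\lambda_{k+1}$, $r=r_{k+1}$, $\tilde\epsilon=\tilde\epsilon_{k+1}$; the claim is a purely real-number inequality. *)

(* Defs.v *)
From Stdlib Require Import Reals Lra.

(* Main.v *)
Require Import Defs.
From Stdlib Require Import Reals Lra Psatz.
Open Scope R_scope.

Theorem mainTheorem11 (mu c m dt C g Fk Fstar : R) :
  0 < mu -> 0 < c -> 0 < m -> 0 < dt -> dt < 1/2 -> 0 <= C -> 0 <= g ->
  Fstar <= Fk -> 0 <= Fstar ->
  0 < g^2 / (4 * c^2) + 4 * dt * mu * Fk / (3 * m) ->
  let lam := Rmax (sqrt (4 * C * g^3 / (g^2 / (4 * c^2) + 4 * dt * mu * Fk / (3 * m))) - mu) mu / 2 in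
  let r := g / (2 * lam + mu) in
  let eps := dt * (mu / (2 * lam + mu)) in
  4 * C * r^3 - lam / c^2 * r^2 <=
    (2 * lam / (2 * lam + mu)) * (4 * eps / m) * (Fk - Fstar)
    + 4 * eps * (1 + 1 / m) * Fstar.
Proof.
  intros Hmu Hc Hm Hdt Hdt2 HC Hg HF HF0 HD lam r eps.
  set (a := (g^2 / (4 * c^2))) in *.
  set (k := 4 * dt * mu / m).
  assert (Ha : 0 <= a) by (unfold a; apply Rmult_le_pos; [nra| apply Rlt_le, Rinv_0_lt_compat; nra]).
  assert (Hk : 0 <= k) by (unfold k; apply Rmult_le_pos; [nra| apply Rlt_le, Rinv_0_lt_compat; nra]).
  set (D := (a + 4 * dt * mu * Fk / (3 * m))) in *.
  assert (HDk : D = a + k * Fk / 3) by (unfold D, k; field; lra).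
  set (S := (sqrt (4 * C * g ^ 3 / D))) in *.
  assert (HS0 : 0 <= S) by apply sqrt_pos.
  assert (HSD : S * S * D = 4 * C * g^3).
  { unfold S. rewrite sqrt_sqrt. field. lra.
    apply Rmult_le_pos. apply Rmult_le_pos; [lra| apply pow_le; lra].
    apply Rlt_le, Rinv_0_lt_compat; lra. }
  set (M := (Rmax (S - mu) mu)) in *.
  assert (HM1 : S - mu <= M) by apply Rmax_l.
  assert (HM2 : mu <= M) by apply Rmax_r.
  assert (Hlam : lam = M / 2) by reflexivity.
  set (L := 2 * lam + mu).
  assert (HL : L = M + mu) by (unfold L; rewrite Hlam; field).
  assert (HLpos : 0 < L) by lra.
  assert (HLS : S <= L) by lra.
  assert (HaL : a * (L * L) <= (M / 2) * g^2 * L / c^2).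
  { replace ((M / 2) * g^2 * L / c^2) with (2 * M * L * a) by (unfold a; field; lra).
    assert (L <= 2 * M) by lra. assert (0 <= a * L) by nra. nra. }
  assert (HP : 4 * C * g^3 - (M / 2) * g^2 * L / c^2 <=
      M * L * k * (Fk - Fstar) + L * L * (k + 4 * dt * mu) * Fstar).
  { assert (S * S * D <= L * L * D) by (apply Rmult_le_compat_r; [lra| apply Rmult_le_compat; lra]).
    assert (L * L <= 3 * M * L) by nra.
    assert (0 <= k * (Fk - Fstar)) by nra.
    assert (k * (Fk - Fstar) * (L * L) <= 3 * M * L * k * (Fk - Fstar)) by nra.
    assert (0 <= dt * mu * Fstar * (L * L)).
    { apply Rmult_le_pos; [|nra]. apply Rmult_le_pos; nra. }
    assert (0 <= k * Fstar * (L * L)) by (apply Rmult_le_pos; [apply Rmult_le_pos; lra| nra]).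
    assert (E1 : L * L * D = a * (L * L) + k * (Fk - Fstar) * (L * L) / 3 + k * Fstar * (L * L) / 3)
      by (rewrite HDk; field).
    assert (E2 : L * L * (k + 4 * dt * mu) * Fstar = k * Fstar * (L * L) + 4 * (dt * mu * Fstar * (L * L))) by ring.
    assert (E3 : M * L * k * (Fk - Fstar) = 3 * M * L * k * (Fk - Fstar) / 3) by field.
    lra. }
  assert (Hr : r = g / L) by reflexivity.
  assert (He : eps = dt * (mu / L)) by reflexivity.
  rewrite Hr, He.
  replace (lam / c^2) with (M / 2 / c^2) by (rewrite Hlam; reflexivity).
  replace (2 * lam) with M by (rewrite Hlam; field).
  apply Rmult_le_reg_r with (L^3). apply pow_lt; lra.
  replace ((4 * C * (g / L) ^ 3 - M / 2 / c ^ 2 * (g / L) ^ 2) * L ^ 3)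
    with (4 * C * g^3 - (M / 2) * g^2 * L / c^2) by (field; lra).
  replace ((M / L * (4 * (dt * (mu / L)) / m) * (Fk - Fstar) +
     4 * (dt * (mu / L)) * (1 + 1 / m) * Fstar) * L ^ 3)
    with (M * L * k * (Fk - Fstar) + L * L * (k + 4 * dt * mu) * Fstar)
    by (unfold k; field; lra).
  exact HP.
Qed.
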